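(* A canonical term $t$ of $\Phi$ is in normal form (in $\Phi$) if and only if $\langle\!\langle t\rangle\!\rangle$ is in $\rightarrow_v$-normal form.
   Context: $\lambda$-terms: $M::=x\mid\lambda x.M\mid MN$, variables from a set $\Upsilon$ with a fixed total order, $FV(M)$ the ordered sequence of free variables. Values $V::=x\mid\lambda x.M$; weak call-by-value reduction $\rightarrow_v$: $(\lambda x.M)V\rightarrow_v M\{V/x\}$ for values $V$, closed under $ML$ and $LM$ contexts (no reduction under $\lambda$). $\Phi$ is the constructor rewrite system with binary function symbol $\mathbf{app}$ and constructors $c_{x,M}$ ($M$ a $\lambda$-term, $x\in\Upsilon$) of arity the length of $FV(\lambda x.M)$; $[\![x]\!]=x$, $[\![\lambda x.M]\!]=c_{x,M}(x_1,\dots,x_n)$ with $FV(\lambda x.M)=x_1,\dots,x_n$, $[\![MN]\!]=\mathbf{app}([\![M]\!],[\![N]\!])$; rules $\mathbf{app}(c_{x,M}(x_1,\dots,x_n),x)\rightarrow[\![M]\!]$; rewriting is call-by-value (variables of a rule are instantiated with constructor terms, i.e. closed terms built only from constructors; steps may occur anywhere). A term is in normal form if no step applies. $\langle\!\langle x\rangle\!\rangle=x$, $\langle\!\langle\mathbf{app}(u,v)\rangle\!\rangle=\langle\!\langle u\rangle\!\rangle\langle\!\langle v\rangle\!\rangle$, $\langle\!\langle c_{x,M}(t_1,\dots,t_n)\rangle\!\rangle=(\lambda x.M)\{\langle\!\langle t_1\rangle\!\rangle/x_1,\dots,\langle\!\langle t_n\rangle\!\rangle/x_n\}$ with $FV(\lambda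 x.M)=x_1,\dots,x_n$. A closed term $t$ is canonical if it is a constructor term or $t=\mathbf{app}(u,v)$ with $u,v$ canonical. *)

(* Defs.v *)
From Stdlib Require Import List.
From mathcomp Require Import all_boot.
Set Implicit Arguments. Unset Strict Implicit. Unset Printing Implicit Defensive.

(** Variables: the set Upsilon is nat, with its usual total order [leq]. *)

Inductive lterm : Type :=
| Var : nat -> lterm
| Lam : nat -> lterm -> lterm
| App : lterm -> lterm -> lterm.

Fixpoint fv (M : lterm) : seq nat :=
  match M with
  | Var x => [:: x]
  | Lam x N => filter (fun y => y != x) (fv N)
  | App N L => fv N ++ fv L
  end.

Definition FV (M : lterm) : seq nat := sort leq (undup (fv M)).

Fixpoint vars (M : lterm) : seq nat :=
  match M with
  | Var x => [:: x]
  | Lam x N => x :: vars N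
  | App N L => vars N ++ vars L
  end.

(** capture-avoiding simultaneous substitution M{N1/y1,...,Nk/yk},
    with sigma = [:: (y1,N1); ...; (yk,Nk)] (first binding of a variable wins). *)
Fixpoint ssubst (sigma : seq (nat * lterm)) (M : lterm) : lterm :=
  match M with
  | Var y => match [seq p <- sigma | p.1 == y] with
             | p :: _ => p.2
             | [::] => Var y
             end
  | App N L => App (ssubst sigma N) (ssubst sigma L)
  | Lam y N =>
      let sigma' := [seq p <- sigma | p.1 != y] in
      if has (fun p => y \in fv p.2) sigma' then
        let z := (\max_(v <- y :: vars N ++ [seq p.1 | p <- sigma']
                            ++ flatten [seq vars p.2 | p <- sigma']) v).+1 in
        Lam z (ssubst ((y, Var z) :: sigma') N)
      else Lam y (ssubst sigma' N)
  end.

Definition subst1 (V : lterm) (x : nat) (M : lterm) : lterm := ssubst [:: (x, V)] M.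

Definition is_value (M : lterm) : Prop :=
  match M with Var _ | Lam _ _ => True | App _ _ => False end.

Inductive vstep : lterm -> lterm -> Prop :=
| vs_beta x M V : is_value V -> vstep (App (Lam x M) V) (subst1 V x M)
| vs_appl M M' L : vstep M M' -> vstep (App M L) (App M' L)
| vs_appr L M M' : vstep M M' -> vstep (App L M) (App L M').

Definition v_normal (M : lterm) : Prop := ~ exists N, vstep M N.

(** Terms of Phi: variables, app(u,v), and c_{x,M}(t1,...,tn). *)
Inductive pterm : Type :=
| PVar : nat -> pterm
| PApp : pterm -> pterm -> pterm
| PCon : nat -> lterm -> seq pterm -> pterm.

Inductive is_cons : pterm -> Prop :=
| IC x M ts : size ts = size (FV (Lam x M)) -> Forall is_cons ts ->
              is_cons (PCon x M ts).

Inductive canonical : pterm -> Prop :=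
| can_cons t : is_cons t -> canonical t
| can_app u v : canonical u -> canonical v -> canonical (PApp u v).

Fixpoint enc (M : lterm) : pterm :=
  match M with
  | Var x => PVar x
  | Lam x N => PCon x N [seq PVar y | y <- FV (Lam x N)]
  | App N L => PApp (enc N) (enc L)
  end.

Fixpoint psubst (sigma : seq (nat * pterm)) (t : pterm) : pterm :=
  match t with
  | PVar y => match [seq p <- sigma | p.1 == y] with
              | p :: _ => p.2
              | [::] => PVar y
              end
  | PApp u v => PApp (psubst sigma u) (psubst sigma v)
  | PCon x M ts => PCon x M (map (psubst sigma) ts)
  end.

(** call-by-value rewriting in Phi: rule app(c_{x,M}(x1..xn), x) -> [[M]]
    with x1..xn, x instantiated by constructor terms; steps anywhere. *)
Inductive phi_step : pterm -> pterm -> Prop :=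
| ps_rule x M ss s :
    size ss = size (FV (Lam x M)) -> Forall is_cons ss -> is_cons s ->
    phi_step (PApp (PCon x M ss) s)
             (psubst (zip (FV (Lam x M)) ss ++ [:: (x, s)]) (enc M))
| ps_appl u u' v : phi_step u u' -> phi_step (PApp u v) (PApp u' v)
| ps_appr u v v' : phi_step v v' -> phi_step (PApp u v) (PApp u v')
| ps_con x M l1 t t' l2 : phi_step t t' ->
    phi_step (PCon x M (l1 ++ t :: l2)) (PCon x M (l1 ++ t' :: l2)).

Definition phi_normal (t : pterm) : Prop := ~ exists t', phi_step t t'.

Fixpoint dec (t : pterm) : lterm :=
  match t with
  | PVar x => Var x
  | PApp u v => App (dec u) (dec v)
  | PCon x M ts => ssubst (zip (FV (Lam x M)) (map dec ts)) (Lam x M)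
  end.

(* Main.v *)
Require Import Defs.
From Stdlib Require Import List Classical.
From mathcomp Require Import all_boot.

Lemma step_not_cons t t' : phi_step t t' -> ~ is_cons t.
Proof.
elim=> //; try by move=> *; move=> H; inversion H.
move=> x M l1 t0 t0' l2 _ IH H; inversion H; subst.
match goal with Hf : Forall is_cons _ |- _ => move: Hf end.
rewrite Forall_app => -[_ H']; inversion H'; subst; exact: IH.
Qed.

Lemma cons_normal t : is_cons t -> phi_normal t.
Proof. by move=> H [t' Hs]; exact: (step_not_cons _ _ Hs H). Qed.

Lemma dec_cons t : is_cons t -> exists y N, dec t = Lam y N.
Proof.
case=> x M ts _ _ /=.
case: ifP => _; by do 2 eexists.
Qed.

Lemma can_value t : canonical t -> is_value (dec t) -> is_cons t.
Proof. by case. Qed.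

Lemma lam_normal y N : v_normal (Lam y N).
Proof. by move=> [N' H]; inversion H. Qed.

Theorem lemma3 (t : pterm) :
  canonical t -> (phi_normal t <-> v_normal (dec t)).
Proof.
elim=> [t0 Hc|u v Hu IHu Hv IHv].
  split=> _; last exact: cons_normal _ Hc.
  by have [y [N ->]] := dec_cons _ Hc; exact: lam_normal.
split.
- move=> Hn [N Hs] /=; inversion Hs as [x0 M0 V0 HV E1 E2|? ? ? ? E1|? ? ? ? E1]; subst.
  + have Hcu : is_cons u by apply: (can_value _ Hu); rewrite -E1.
    have Hcv : is_cons v by exact: (can_value _ Hv).
    inversion Hcu; subst.
    apply: Hn; eexists; exact: ps_rule.
  + have : ~ v_normal (dec u) by move=> Hq; apply: Hq; eexists; eauto.
    move/IHu => Hnu; apply: Hn.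
    case: (Classical_Prop.classic (exists u', phi_step u u')) => [[u' Hu']|Hne].
      by eexists; apply: ps_appl; eauto.
    by exfalso; apply: Hnu.
  + have : ~ v_normal (dec v) by move=> Hq; apply: Hq; eexists; eauto.
    move/IHv => Hnv; apply: Hn.
    case: (Classical_Prop.classic (exists v', phi_step v v')) => [[v' Hv']|Hne].
      by eexists; apply: ps_appr; eauto.
    by exfalso; apply: Hnv.
- move=> Hn [t' Hs]; inversion Hs as [x M ss s Hsz Hss Hs0| | |]; subst.
  + have [y [N Ey]] := dec_cons _ (IC Hsz Hss).
    have [y' [N' Ey']] := dec_cons _ Hs0.
    apply: Hn; exists (subst1 (dec v) y N).
    change (vstep (App (dec (PCon x M ss)) (dec v)) (subst1 (dec v) y N)).
    rewrite Ey; apply: vs_beta; by rewrite Ey'.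
  + have : ~ phi_normal u by move=> Hq; apply: Hq; eexists; eauto.
    move=> Hnu; apply: Hnu; apply/IHu => -[N HN]; apply: Hn.
    by exists (App N (dec v)); apply: vs_appl.
  + have : ~ phi_normal v by move=> Hq; apply: Hq; eexists; eauto.
    move=> Hnv; apply: Hnv; apply/IHv => -[N HN]; apply: Hn.
    by exists (App (dec u) N); apply: vs_appr.
Qed.
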